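(* Let $K$ be a field, $X=\{x_1,\dots,x_n\}$, $H=\langle h_1,\dots,h_r\rangle\subseteq K[X]$ and $f\in K[X]$. Let $Y=\{x_1,\dots,x_d\}$ be a maximum-size set of independent variables for $H$ (so $d=\dim H$), let $Z=\{x_{d+1},\dots,x_n\}$, and let $H'=\langle h_1,\dots,h_r\rangle K(Y)[Z]$. Then $$\langle h_1,\dots,h_r,f\cdot t-1\rangle K[X,t]\cap K[Y]=\langle 0\rangle \quad\text{and}\quad \langle h_1,\dots,h_r,f\rangle K[X]\cap K[Y]=\langle 0\rangle$$ (with $t$ a new variable) if and only if $f$ is a non-zero zero divisor in $K(Y)[Z]/\sqrt{H'}$.
   Context: A set $Y=\{x_1,\dots,x_d\}\subseteq X$ is a maximum-size set of independent variables for $H$ if $H\cap K[Y]=\langle 0\rangle$ and for every subset $W\subseteq X$ with more than $d$ elements $H\cap K[W]\neq\langle 0\rangle$. $K(Y)$ is the field of rational functions in $x_1,\dots,x_d$, and $\sqrt{H'}$ is the radical of $H'$ in $K(Y)[Z]$. *)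

(* Defs.v *)
From HB Require Import structures.
From mathcomp Require Import all_boot all_order all_algebra.
From mathcomp Require Import fraction.
From mathcomp Require Import mpoly.
Set Implicit Arguments. Unset Strict Implicit. Unset Printing Implicit Defensive.
Import Order.TTheory GRing.Theory.
Local Open Scope ring_scope.

Definition in_vars (K : fieldType) (n : nat) (W : {set 'I_n}) (p : {mpoly K[n]}) : Prop :=
  forall mo : 'X_{1..n}, mo \in msupp p -> forall i : 'I_n, i \notin W -> mo i = 0%N.

Definition in_first_vars (K : fieldType) (n d : nat) (p : {mpoly K[n]}) : Prop :=
  forall mo : 'X_{1..n}, mo \in msupp p -> forall i : 'I_n, (d <= i)%N -> mo i = 0%N.

Definition in_ideal (R : comNzRingType) (r : nat) (h : 'I_r -> R) (p : R) : Prop :=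
  exists g : 'I_r -> R, p = \sum_(i < r) g i * h i.

Definition in_radical (R : comNzRingType) (r : nat) (h : 'I_r -> R) (p : R) : Prop :=
  exists k : nat, in_ideal h (p ^+ k).

Definition nonzero_zero_divisor_mod (R : comNzRingType) (I : R -> Prop) (a : R) : Prop :=
  ~ I a /\ exists b : R, ~ I b /\ I (a * b).

Definition max_indep_first (K : fieldType) (n d r : nat) (h : 'I_r -> {mpoly K[n]}) : Prop :=
  (forall p, in_ideal h p -> in_first_vars d p -> p = 0) /\
  (forall W : {set 'I_n}, (d < #|W|)%N ->
     exists p, in_ideal h p /\ in_vars W p /\ p != 0).

Definition KY (K : fieldType) (d : nat) := {fraction {mpoly K[d]}}.

(* the canonical map K[X] -> K(Y)[Z], X = Y ⊔ Z, with #|Y| = d and #|Z| = m *)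
Definition to_KYZ (K : fieldType) (d m : nat) (p : {mpoly K[d + m]}) : {mpoly (KY K d)[m]} :=
  mmap (fun c : K => (@FracField.tofrac {mpoly K[d]} (c%:MP))%:MP)
       (fun i : 'I_(d + m) => match split i with
                              | inl j => ((@FracField.tofrac {mpoly K[d]} 'X_j)%:MP)
                              | inr j => 'X_j
                              end) p.

(* the inclusion K[X] -> K[X, t], with t the last (new) variable *)
Definition to_Xt (K : fieldType) (n : nat) (p : {mpoly K[n]}) : {mpoly K[n.+1]} :=
  mmap (fun c : K => c%:MP) (fun i : 'I_n => 'X_(widen_ord (leqnSn n) i)) p.

Definition var_t (K : fieldType) (n : nat) : {mpoly K[n.+1]} := 'X_(@ord_max n).

(* Main.v *)
Require Import Defs.
From HB Require Import structures.
From mathcomp Require Import all_boot all_order all_algebra.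
From mathcomp Require Import fraction.
From mathcomp Require Import mpoly.
From mathcomp Require Import generic_quotient.
From Stdlib Require Import Classical.
Set Implicit Arguments. Unset Strict Implicit. Unset Printing Implicit Defensive.
Import GRing.Theory.
Local Open Scope ring_scope.

Section MmapGen.
Variables (n : nat) (R S : comRingType).

Lemma eq_mmap (f1 f2 : R -> S) (h1 h2 : 'I_n -> S) (p : {mpoly R[n]}) :
  f1 =1 f2 -> h1 =1 h2 -> mmap f1 h1 p = mmap f2 h2 p.
Proof.
move=> ef eh; rewrite /mmap; apply: eq_bigr => m _.
by rewrite ef (mmap1_eq _ eh).
Qed.

Lemma rmorph_mmap (psi : {rmorphism {mpoly R[n]} -> S}) p :
  psi p = mmap (fun c => psi c%:MP) (fun i => psi 'X_i) p.
Proof.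
rewrite {1}(mpolyE p) rmorph_sum /mmap; apply: eq_bigr => m _.
rewrite -mul_mpolyC rmorphM mpolyXE_id rmorph_prod /mmap1; congr (_ * _).
by apply: eq_bigr => i _; rewrite rmorphXn.
Qed.

Lemma mmap_comp (T : comRingType) (f : R -> S) (h : 'I_n -> S)
   (psi : {rmorphism S -> T}) p :
  psi (mmap f h p) = mmap (psi \o f) (psi \o h) p.
Proof.
rewrite /mmap rmorph_sum; apply: eq_bigr => m _.
rewrite rmorphM rmorph_prod /mmap1; congr (_ * _).
by apply: eq_bigr => i _; rewrite rmorphXn.
Qed.

End MmapGen.

Lemma mmap_id (n : nat) (R : comRingType) (p : {mpoly R[n]}) :
  mmap (@mpolyC n R) (fun i => 'X_i) p = p.
Proof.
rewrite {2}(mpolyE p) /mmap; apply: eq_bigr => m _.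
by rewrite mmap1_id mul_mpolyC.
Qed.



Lemma frac_decomp (R : idomainType) (x : {fraction R}) :
  exists a b : R, b != 0 /\ x = (FracField.tofrac a) / (FracField.tofrac b).
Proof.
elim/quotW: x => y.
exists (y.1), (y.2); split; first exact: denom_ratioP.
have hb : FracField.tofrac y.2 != 0 by rewrite tofrac_eq0 denom_ratioP.
apply: (mulIf hb); rewrite mulfVK //.
unlock FracField.tofrac.
rewrite -[_ * _]/(FracField.mul _ _).
rewrite -FracField.pi_mul.
apply/eqmodP => /=.
rewrite FracField.equivfE /FracField.mulf /= !numden_Ratio ?mulr1 ?mul1r ?oner_neq0 ?denom_ratioP //.
by rewrite mulrC.
Qed.

Lemma split_lshift a b (j : 'I_a) : split (lshift b j) = inl j.
Proof. exact: (unsplitK (inl _ j)). Qed.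
Lemma split_rshift a b (j : 'I_b) : split (rshift a j) = inr j.
Proof. exact: (unsplitK (inr _ j)). Qed.

Section Phi.
Variables (K : fieldType) (d m : nat).
Local Notation n := (d + m)%N.
Local Notation P := {mpoly K[d + m]}.
Local Notation F := (KY K d).
Local Notation A := {mpoly (KY K d)[m]}.
Local Notation Q := {mpoly {mpoly K[d]}[m]}.
Local Notation tof := (@FracField.tofrac {mpoly K[d]}).

Definition cKYZ := (mpolyC m (R := KY K d)) \o tof \o (mpolyC d (R := K)).
Definition vKYZ (i : 'I_(d + m)) : A :=
  match split i with inl j => (tof 'X_j)%:MP | inr j => 'X_j end.
Definition phi (p : P) : A := mmap cKYZ vKYZ p.
HB.instance Definition _ := GRing.RMorphism.copy phi phi.

Lemma to_KYZE p : to_KYZ p = phi p. Proof. by []. Qed.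

Definition iotaY (c : {mpoly K[d]}) : P := mmap (mpolyC _ (R := K)) (fun j => 'X_(lshift m j)) c.
HB.instance Definition _ := GRing.RMorphism.copy iotaY iotaY.

Definition alpha (p : P) : Q :=
  mmap ((mpolyC m (R := {mpoly K[d]})) \o (mpolyC d (R := K)))
       (fun i => match split i with inl j => ('X_j)%:MP | inr j => 'X_j end) p.
HB.instance Definition _ := GRing.RMorphism.copy alpha alpha.

Definition gamma (q : Q) : P := mmap iotaY (fun j => 'X_(rshift d j)) q.
HB.instance Definition _ := GRing.RMorphism.copy gamma gamma.

Definition beta (q : Q) : A := map_mpoly tof q.
HB.instance Definition _ := GRing.RMorphism.copy beta beta.

Lemma mmapXU (R S : comRingType) k (f : {rmorphism R -> S}) (h : 'I_k -> S) i :
  mmap f h 'X_i = h i.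
Proof. by rewrite mmapX mmap1U. Qed.

Lemma iotaC c : iotaY c%:MP = c%:MP. Proof. exact: mmapC. Qed.
Lemma iotaX j : iotaY 'X_j = 'X_(lshift m j). Proof. exact: mmapXU. Qed.

Lemma gammaK : cancel alpha gamma.
Proof.
move=> p; rewrite /alpha mmap_comp -[RHS]mmap_id; apply: eq_mmap => [c|i] /=.
  rewrite /gamma mmapC; exact: iotaC.
case: splitP => j ij.
  have -> : i = lshift m j by apply: val_inj.
  rewrite /gamma mmapC; exact: iotaX.
have -> : i = rshift d j by apply: val_inj.
by rewrite /gamma mmapXU.
Qed.

Lemma phi_iotaY c : phi (iotaY c) = (tof c)%:MP.
Proof.
rewrite /iotaY mmap_comp.
have -> : (tof c)%:MP = ((mpolyC m (R := KY K d)) \o tof) (mmap (mpolyC _ (R := K)) (fun i => 'X_i) c) by rewrite mmap_id.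
rewrite mmap_comp; apply: eq_mmap => [x|j] /=; rewrite /phi ?mmapC //.
by rewrite mmapXU /vKYZ split_lshift.
Qed.

Lemma phi_alpha p : phi p = beta (alpha p).
Proof.
rewrite /alpha mmap_comp; apply: eq_mmap => [c|i] /=.
  by rewrite /beta /map_mpoly mmapC.
rewrite /vKYZ; case: split => j; rewrite /beta /map_mpoly ?mmapC //.
by rewrite mmapXU.
Qed.
Lemma alpha_iotaY c : alpha (iotaY c) = c%:MP.
Proof.
rewrite /iotaY mmap_comp.
have -> : c%:MP = (mpolyC m (R := {mpoly K[d]})) (mmap (mpolyC _ (R := K)) (fun i => 'X_i) c) by rewrite mmap_id.
rewrite mmap_comp; apply: eq_mmap => [x|j] /=; rewrite /alpha ?mmapC //.
by rewrite mmapXU split_lshift.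
Qed.

Lemma alphaK : cancel gamma alpha.
Proof.
move=> q; rewrite /gamma mmap_comp -[RHS]mmap_id; apply: eq_mmap => [c|j] /=.
  exact: alpha_iotaY.
by rewrite /alpha mmapXU split_rshift.
Qed.

Lemma phi_gamma q : phi (gamma q) = beta q.
Proof. by rewrite phi_alpha alphaK. Qed.

Lemma beta_tof c : beta (c%:MP) = (tof c)%:MP.
Proof. by rewrite /beta /map_mpoly mmapC. Qed.

Lemma beta_X mo : beta 'X_[mo] = 'X_[mo].
Proof. by rewrite /beta /map_mpoly mmapX mmap1_id. Qed.

Lemma clear_den (a : A) : exists D : {mpoly K[d]}, D != 0 /\ exists q : Q, beta q = (tof D)%:MP * a.
Proof.
elim/mpolyind: a => [|c mo a _ _ [D [nzD [q eq]]]].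
  by exists 1; split; [exact: oner_neq0 | exists 0; rewrite mulr0 rmorph0].
have [x [y [nzy ->]]] := frac_decomp c.
have nzy' : tof y != 0 by rewrite tofrac_eq0.
exists (y * D); split; first by rewrite mulf_neq0.
exists ((x * D)%:MP * 'X_[mo] + y%:MP * q).
rewrite rmorphD !rmorphM /= !beta_tof beta_X eq mulrDr.
rewrite -!mul_mpolyC !mulrA -!rmorphM /=; congr (_ * _ + _).
congr (_%:MP); rewrite !rmorphM /=.
by rewrite mulrAC [tof y * _]mulrC mulfVK.
Qed.

Lemma beta_inj : injective beta.
Proof.
move=> q1 q2 e; apply/mpolyP => mo.
have h1 := @mcoeff_map_mpoly _ _ _ tof mo q1.
have h2 := @mcoeff_map_mpoly _ _ _ tof mo q2.
have e2 : tof q1@_mo = tof q2@_mo by rewrite -h1 -h2; exact: (congr1 (mcoeff mo) e).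
by move/eqP: e2; rewrite tofrac_eq => /eqP.
Qed.

Lemma phi_inj : injective phi.
Proof.
move=> p1 p2 e.
have e2 : alpha p1 = alpha p2.
  by apply: beta_inj; exact: (etrans (esym (phi_alpha p1)) (etrans e (phi_alpha p2))).
by rewrite -(gammaK p1) e2 gammaK.
Qed.

End Phi.

Section Supp.
Variables (K : fieldType) (N : nat) (Pr : pred 'I_N).

Definition supp_in (p : {mpoly K[N]}) : Prop :=
  forall mo : 'X_{1..N}, mo \in msupp p -> forall i : 'I_N, ~~ Pr i -> mo i = 0%N.

Lemma supp_in0 : supp_in 0.
Proof. by move=> mo; rewrite msupp0. Qed.

Lemma supp_inC c : supp_in c%:MP.
Proof.
move=> mo; rewrite msuppC; case: (c == 0) => //.
by rewrite mem_seq1 => /eqP -> i _; rewrite mnm0E.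
Qed.

Lemma supp_inX i : Pr i -> supp_in 'X_i.
Proof.
move=> Pi mo; rewrite msuppX mem_seq1 => /eqP -> j Pj.
by rewrite mnm1E; case: eqP => // eij; rewrite -eij Pi in Pj.
Qed.

Lemma supp_inD p q : supp_in p -> supp_in q -> supp_in (p + q).
Proof.
move=> sp sq mo /msuppD_le; rewrite mem_cat => /orP [/sp|/sq]; exact.
Qed.

Lemma supp_inN p : supp_in p -> supp_in (- p).
Proof. by move=> sp mo; rewrite (perm_mem (msuppN _)); exact: sp. Qed.

Lemma supp_inB p q : supp_in p -> supp_in q -> supp_in (p - q).
Proof. by move=> sp sq; apply: supp_inD => //; apply: supp_inN. Qed.

Lemma supp_inM p q : supp_in p -> supp_in q -> supp_in (p * q).
Proof.
move=> sp sq mo /msuppM_le /allpairsP [[m1 m2] /= [h1 h2 ->]] i Pi.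
by rewrite mnmDE (sp _ h1 _ Pi) (sq _ h2 _ Pi).
Qed.

Lemma supp_in_sum (I : Type) (r : seq I) (Pi : pred I) (G : I -> {mpoly K[N]}) :
  (forall i, Pi i -> supp_in (G i)) -> supp_in (\sum_(i <- r | Pi i) G i).
Proof.
move=> h; elim/big_rec: _ => [|i x Pii sx]; first exact: supp_in0.
by apply: supp_inD => //; apply: h.
Qed.

Lemma supp_in_prod (I : Type) (r : seq I) (Pi : pred I) (G : I -> {mpoly K[N]}) :
  (forall i, Pi i -> supp_in (G i)) -> supp_in (\prod_(i <- r | Pi i) G i).
Proof.
move=> h; elim/big_rec: _ => [|i x Pii sx]; first by rewrite -mpolyC1; exact: supp_inC.
by apply: supp_inM => //; apply: h.
Qed.

Lemma supp_inXn p k : supp_in p -> supp_in (p ^+ k).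
Proof.
move=> sp; elim: k => [|k ih]; first by rewrite expr0 -mpolyC1; exact: supp_inC.
by rewrite exprS; apply: supp_inM.
Qed.

Lemma supp_in_mmap k (f : K -> {mpoly K[N]}) (h : 'I_k -> {mpoly K[N]}) (p : {mpoly K[k]}):
  (forall c, supp_in (f c)) -> (forall i, supp_in (h i)) -> supp_in (mmap f h p).
Proof.
move=> sf sh; rewrite /mmap; apply: supp_in_sum => mo _.
apply: supp_inM => //; rewrite /mmap1; apply: supp_in_prod => i _.
exact: supp_inXn.
Qed.

Lemma supp_in_mmapE (p : {mpoly K[N]}) : supp_in p ->
  mmap (mpolyC N (R := K)) (fun i => if Pr i then 'X_i else 0) p = p.
Proof.
move=> sp; rewrite {2}(mpolyE p) /mmap big_seq [RHS]big_seq; apply: eq_bigr => mo Hmo.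
rewrite -mmap1_id mul_mpolyC; congr (_ *: _); rewrite /mmap1; apply: eq_bigr => i _.
by case: ifP => // /negbT /(sp _ Hmo) ->; rewrite !expr0.
Qed.

End Supp.

Section Emb.
Variables (K : fieldType) (d N : nat) (H : (d <= N)%N).

Definition embF (c : {mpoly K[d]}) : {mpoly K[N]} :=
  mmap (mpolyC N (R := K)) (fun j : 'I_d => 'X_(widen_ord H j)) c.
HB.instance Definition _ := GRing.RMorphism.copy embF embF.

Definition restrF (p : {mpoly K[N]}) : {mpoly K[d]} :=
  mmap (mpolyC d (R := K)) (fun i : 'I_N => if (insub (val i) : option 'I_d) is Some j then 'X_j else 0) p.

Lemma ifvE (p : {mpoly K[N]}) : in_first_vars d p <-> supp_in (fun i : 'I_N => (i < d)%N) p.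
Proof.
split=> h mo Hmo i Hi; apply: (h mo Hmo i).
  by rewrite leqNgt.
by rewrite -leqNgt.
Qed.

Lemma ifv_embF c : in_first_vars d (embF c).
Proof.
apply/ifvE; apply: supp_in_mmap => [x|j]; first exact: supp_inC.
by apply: supp_inX => /=.
Qed.

Lemma embF_restr p : in_first_vars d p -> embF (restrF p) = p.
Proof.
move/ifvE => sp; rewrite -[RHS](supp_in_mmapE sp) /restrF mmap_comp.
apply: eq_mmap => [c|i] /=; first by rewrite /embF mmapC.
case: insubP => [j ltid ej|/negbTE ->]; last by rewrite rmorph0.
rewrite ltid /embF mmapXU; congr 'X_[U_(_)]; exact: val_inj.
Qed.

End Emb.

Section Ideal.
Variables (R : comNzRingType) (r : nat) (h : 'I_r -> R).

Lemma in_ideal0 : in_ideal h 0.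
Proof. by exists (fun _ => 0); rewrite big1 // => i _; rewrite mul0r. Qed.

Lemma in_idealD p q : in_ideal h p -> in_ideal h q -> in_ideal h (p + q).
Proof.
move=> [a ->] [b ->]; exists (fun i => a i + b i).
by rewrite -big_split /=; apply: eq_bigr => i _; rewrite mulrDl.
Qed.

Lemma in_idealM c p : in_ideal h p -> in_ideal h (c * p).
Proof.
move=> [a ->]; exists (fun i => c * a i).
by rewrite mulr_sumr; apply: eq_bigr => i _; rewrite mulrA.
Qed.

Lemma in_idealMr c p : in_ideal h p -> in_ideal h (p * c).
Proof. by rewrite mulrC; apply: in_idealM. Qed.

Lemma in_idealN p : in_ideal h p -> in_ideal h (- p).
Proof. by move=> hp; rewrite -mulN1r; apply: in_idealM. Qed.

Lemma in_idealB p q : in_ideal h p -> in_ideal h q -> in_ideal h (p - q).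
Proof. by move=> hp hq; apply: in_idealD => //; apply: in_idealN. Qed.

Lemma in_ideal_gen i : in_ideal h (h i).
Proof.
exists (fun j => (j == i)%:R); rewrite (bigD1 i) //= eqxx mul1r big1 ?addr0 //.
by move=> j /negbTE ->; rewrite mul0r.
Qed.

Lemma in_ideal_sum (I : Type) (s : seq I) (P : pred I) (G : I -> R) :
  (forall i, P i -> in_ideal h (G i)) -> in_ideal h (\sum_(i <- s | P i) G i).
Proof.
move=> hG; elim/big_rec: _ => [|i x Pi hx]; first exact: in_ideal0.
by apply: in_idealD => //; apply: hG.
Qed.

Lemma in_ideal_rmorph (S : comNzRingType) (psi : {rmorphism R -> S}) p :
  in_ideal h p -> in_ideal (fun i => psi (h i)) (psi p).
Proof.
move=> [a ->]; exists (fun i => psi (a i)).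
by rewrite rmorph_sum; apply: eq_bigr => i _; rewrite rmorphM.
Qed.

Lemma in_ideal_split (g p : R) :
  in_ideal (fun i : 'I_(r + 1) => match split i with inl j => h j | inr _ => g end) p <->
  exists (a : 'I_r -> R) (c : R), p = \sum_(j < r) a j * h j + c * g.
Proof.
split.
  move=> [a ->]; exists (fun j => a (lshift 1 j)), (a (rshift r ord0)).
  rewrite big_split_ord /= big_ord1; congr (_ + _).
    by apply: eq_bigr => j _; rewrite split_lshift.
  by rewrite split_rshift.
move=> [a [c ->]].
exists (fun i => match split i with inl j => a j | inr _ => c end).
rewrite big_split_ord /= big_ord1 !split_rshift; congr (_ + _).
by apply: eq_bigr => j _; rewrite split_lshift.
Qed.

End Ideal.

Section Xt.
Variables (K : fieldType) (Nn : nat).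
Local Notation tof := (@FracField.tofrac {mpoly K[Nn]}).

Definition to_Xt' (p : {mpoly K[Nn]}) : {mpoly K[Nn.+1]} :=
  mmap (mpolyC _ (R := K)) (fun i : 'I_Nn => 'X_(widen_ord (leqnSn Nn) i)) p.
HB.instance Definition _ := GRing.RMorphism.copy to_Xt' to_Xt'.

Lemma to_XtE p : to_Xt p = to_Xt' p. Proof. by []. Qed.

Definition kappa (p : {mpoly K[Nn.+1]}) : {mpoly K[Nn]} :=
  mmap (mpolyC _ (R := K)) (fun i : 'I_Nn.+1 => if (insub (val i) : option 'I_Nn) is Some j then 'X_j else 0) p.
HB.instance Definition _ := GRing.RMorphism.copy kappa kappa.

Lemma to_XtK : cancel to_Xt' kappa.
Proof.
move=> p; rewrite /to_Xt' mmap_comp -[RHS]mmap_id; apply: eq_mmap => [c|i] /=.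
  by rewrite /kappa mmapC.
rewrite /kappa mmapXU; case: insubP => [j _ ej|]; last by rewrite /= ltn_ord.
by congr 'X_[U_(_)]; apply: val_inj.
Qed.

Lemma to_Xt_inj : injective to_Xt'.
Proof. exact: can_inj to_XtK. Qed.

Lemma to_Xt_embF d (H : (d <= Nn)%N) c : to_Xt' (embF H c) = embF (leq_trans H (leqnSn Nn)) c.
Proof.
rewrite /embF mmap_comp; apply: eq_mmap => [x|j] /=; first by rewrite /to_Xt' mmapC.
by rewrite /to_Xt' mmapXU; congr 'X_[U_(_)]; apply: val_inj.
Qed.

Variable (f : {mpoly K[Nn]}).

Definition ev (p : {mpoly K[Nn.+1]}) : {fraction {mpoly K[Nn]}} :=
  mmap (tof \o (mpolyC _ (R := K)))
       (fun i : 'I_Nn.+1 => if (insub (val i) : option 'I_Nn) is Some j then tof 'X_j else (tof f)^-1) p.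
HB.instance Definition _ := GRing.RMorphism.copy ev ev.

Lemma ev_to_Xt p : ev (to_Xt' p) = tof p.
Proof.
rewrite /to_Xt' mmap_comp -{2}[p]mmap_id mmap_comp; apply: eq_mmap => [c|i] /=.
  by rewrite /ev mmapC.
rewrite /ev mmapXU; case: insubP => [j _ ej|]; last by rewrite /= ltn_ord.
by congr (tof 'X_[U_(_)]); apply: val_inj.
Qed.

Lemma ev_t : ev (var_t K Nn) = (tof f)^-1.
Proof.
rewrite /ev /var_t mmapXU; case: insubP => [j|] //=.
by rewrite ltnn.
Qed.

Definition goodI (r : nat) (h : 'I_r -> {mpoly K[Nn]}) (e : {fraction {mpoly K[Nn]}}) :=
  exists N, exists a, in_ideal h a /\ e * (tof f) ^+ N = tof a.

Definition good (e : {fraction {mpoly K[Nn]}}) := exists N, exists a, e * (tof f) ^+ N = tof a.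

Lemma good_tof a : good (tof a).
Proof. by exists 0%N, a; rewrite expr0 mulr1. Qed.

Lemma goodD x y : good x -> good y -> good (x + y).
Proof.
move=> [N1 [a1 e1]] [N2 [a2 e2]]; exists (N1 + N2)%N, (a1 * f ^+ N2 + a2 * f ^+ N1).
rewrite exprD mulrDl rmorphD !rmorphM /= !rmorphXn /= -e1 -e2.
by rewrite mulrA [y * _ * _]mulrAC mulrA.
Qed.

Lemma goodM x y : good x -> good y -> good (x * y).
Proof.
move=> [N1 [a1 e1]] [N2 [a2 e2]]; exists (N1 + N2)%N, (a1 * a2).
by rewrite exprD rmorphM /= -e1 -e2 mulrACA.
Qed.

Lemma good_prod (I : Type) (s : seq I) (P : pred I) (G : I -> {fraction {mpoly K[Nn]}}) :
  (forall i, P i -> good (G i)) -> good (\prod_(i <- s | P i) G i).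
Proof.
move=> hG; elim/big_rec: _ => [|i x Pi hx]; first by rewrite -tofrac1; apply: good_tof.
by apply: goodM => //; apply: hG.
Qed.

Lemma good_sum (I : Type) (s : seq I) (P : pred I) (G : I -> {fraction {mpoly K[Nn]}}) :
  (forall i, P i -> good (G i)) -> good (\sum_(i <- s | P i) G i).
Proof.
move=> hG; elim/big_rec: _ => [|i x Pi hx]; first by rewrite -tofrac0; apply: good_tof.
by apply: goodD => //; apply: hG.
Qed.

Lemma goodX x k : good x -> good (x ^+ k).
Proof.
move=> gx; elim: k => [|k ih]; first by rewrite expr0 -tofrac1; apply: good_tof.
by rewrite exprS; apply: goodM.
Qed.

Lemma good_ev (nzf : f != 0) p : good (ev p).
Proof.
rewrite /ev /mmap; apply: good_sum => mo _; apply: goodM; first exact: good_tof.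
rewrite /mmap1; apply: good_prod => i _; apply: goodX.
case: insubP => [j _ _|_]; first exact: good_tof.
exists 1%N, 1; rewrite expr1 mulVf ?tofrac1 //.
by rewrite tofrac_eq0.
Qed.

Lemma goodI0 r (h : 'I_r -> {mpoly K[Nn]}) : goodI h 0.
Proof. by exists 0%N, 0; rewrite mul0r tofrac0; split => //; apply: in_ideal0. Qed.

Lemma goodID r (h : 'I_r -> {mpoly K[Nn]}) x y : goodI h x -> goodI h y -> goodI h (x + y).
Proof.
move=> [N1 [a1 [i1 e1]]] [N2 [a2 [i2 e2]]]; exists (N1 + N2)%N, (a1 * f ^+ N2 + a2 * f ^+ N1).
split; first by apply: in_idealD; apply: in_idealMr.
rewrite exprD mulrDl rmorphD !rmorphM /= !rmorphXn /= -e1 -e2.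
by rewrite mulrA [y * _ * _]mulrAC mulrA.
Qed.

Lemma goodIM r (h : 'I_r -> {mpoly K[Nn]}) x y : good x -> goodI h y -> goodI h (x * y).
Proof.
move=> [N1 [a1 e1]] [N2 [a2 [i2 e2]]]; exists (N1 + N2)%N, (a1 * a2).
split; first by apply: in_idealM.
by rewrite exprD rmorphM /= -e1 -e2 mulrACA.
Qed.

Lemma goodI_gen r (h : 'I_r -> {mpoly K[Nn]}) i : goodI h (tof (h i)).
Proof. by exists 0%N, (h i); rewrite expr0 mulr1; split => //; apply: in_ideal_gen. Qed.

End Xt.

Lemma in_idealXX (R : comNzRingType) r (h : 'I_r -> R) x y k :
  in_ideal h (x - y) -> in_ideal h (x ^+ k - y ^+ k).
Proof. by move=> hxy; rewrite subrXX; apply: in_idealMr. Qed.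

Lemma embF_irr (K : fieldType) d N (H1 H2 : (d <= N)%N) c : @embF K d N H1 c = embF H2 c.
Proof. by apply: eq_mmap => // j; congr 'X_[U_(_)]; apply: val_inj. Qed.

Section Main.
Variables (K : fieldType) (d m r : nat) (h : 'I_r -> {mpoly K[d + m]}) (f : {mpoly K[d + m]}).
Local Notation n := (d + m)%N.
Local Notation P := {mpoly K[d + m]}.
Local Notation F := (KY K d).
Local Notation A := {mpoly (KY K d)[m]}.
Local Notation tof := (@FracField.tofrac {mpoly K[d]}).
Local Notation phi := (@phi K d m).
Local Notation iotaY := (@iotaY K d m).

Definition Iid (a : A) := in_ideal (fun i => phi (h i)) a.
Definition Jrad (a : A) := in_radical (fun i => phi (h i)) a.

Lemma H0 : (d <= d + m)%N. Proof. exact: leq_addr. Qed.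
Lemma H1 : (d <= (d + m).+1)%N. Proof. by rewrite ltnW // ltnS leq_addr. Qed.

Lemma iotaY_embF c : iotaY c = embF H0 c.
Proof. by apply: eq_mmap => // j; congr 'X_[U_(_)]; apply: val_inj. Qed.

Lemma ifv_iotaY p : in_first_vars d p -> p = iotaY (restrF d p).
Proof. by move=> hp; rewrite iotaY_embF embF_restr. Qed.

Lemma phi_unit p : in_first_vars d p -> p != 0 -> exists c : F, c != 0 /\ phi p = c%:MP.
Proof.
move=> hp nzp; exists (tof (restrF d p)); split; last by rewrite {1}(ifv_iotaY hp) phi_iotaY.
rewrite tofrac_eq0; apply: contraNneq nzp => e.
by rewrite (ifv_iotaY hp) e rmorph0.
Qed.

Lemma IJ a : Iid a -> Jrad a.
Proof. by move=> ha; exists 1%N; rewrite expr1. Qed.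

Lemma clear_fam (T : finType) (a : T -> A) :
  exists D : {mpoly K[d]}, D != 0 /\ exists b : T -> P, forall i, phi (b i) = (tof D)%:MP * a i.
Proof.
have /fin_all_exists [Dq hDq] : forall i, exists Dq : {mpoly K[d]} * P,
    Dq.1 != 0 /\ phi Dq.2 = (tof Dq.1)%:MP * a i.
  move=> i; have [D [nzD [q eq]]] := clear_den (a i).
  by exists (D, gamma q); rewrite /= phi_gamma.
exists (\prod_i (Dq i).1); split.
  by rewrite prodf_seq_neq0; apply/allP => i _; case: (hDq i).
exists (fun i => (Dq i).2 * iotaY (\prod_(j | j != i) (Dq j).1)) => i.
rewrite rmorphM /= phi_iotaY [in RHS](bigD1 i) //= (proj2 (hDq i)).
by rewrite !rmorphM /= mulrAC.
Qed.

Definition cond1 := forall p : {mpoly K[(d + m).+1]},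
       in_ideal (fun i : 'I_(r + 1) =>
                   match split i with
                   | inl j => to_Xt (h j)
                   | inr _ => to_Xt f * var_t K (d + m) - 1
                   end) p ->
       in_first_vars d p -> p = 0.

Definition cond2 := forall p : {mpoly K[d + m]},
       in_ideal (fun i : 'I_(r + 1) =>
                   match split i with
                   | inl j => h j
                   | inr _ => f
                   end) p ->
       in_first_vars d p -> p = 0.

Lemma R2 : nonzero_zero_divisor_mod Jrad (phi f) -> cond2.
Proof.
move=> [nfJ [b [nbJ [k fbJ]]]] p /in_ideal_split [a [c ep]] hp.
apply/eqP; apply: contraT => nzp; exfalso; apply: nbJ.
have [u [nzu eu]] := phi_unit hp nzp.
pose v := (u^-1)%:MP * phi c.
pose i0 := (u^-1)%:MP * \sum_(j < r) phi (a j) * phi (h j).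
have hi0 : Iid i0.
  apply: in_idealM; apply: in_ideal_sum => j _; apply: in_idealM; exact: in_ideal_gen.
have e1 : 1 = i0 + v * phi f.
  have := congr1 phi ep; rewrite eu rmorphD rmorph_sum /= rmorphM /= => e2.
  rewrite /i0 /v -mulrA -mulrDr.
  have -> : \sum_(j < r) phi (a j) * phi (h j) = \sum_(j < r) phi (a j * h j).
    by apply: eq_bigr => j _; rewrite rmorphM.
  by rewrite -e2 -rmorphM mulVf.
exists k.
have : Iid ((b ^+ k) - (v * phi f * b) ^+ k).
  apply: in_idealXX.
  have -> : b - v * phi f * b = i0 * b by rewrite -{1}[b]mul1r e1 mulrDl addrK.
  by apply: in_idealMr.
have h2 : Iid ((v * phi f * b) ^+ k) by rewrite -mulrA exprMn; apply: in_idealM.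
move=> h1; have := in_idealD h1 h2; by rewrite subrK.
Qed.

Local Notation tofP := (@FracField.tofrac {mpoly K[d + m]}).

Lemma Jrad0 : Jrad 0.
Proof. by exists 1%N; rewrite expr1; apply: in_ideal0. Qed.

Lemma Jrad_phi0 : ~ Jrad (phi f) -> f != 0.
Proof. by move=> nJ; apply/eqP => f0; apply: nJ; rewrite f0 rmorph0; apply: Jrad0. Qed.

Lemma R1 : ~ Jrad (phi f) -> cond1.
Proof.
move=> nfJ p /(in_ideal_split (fun j => to_Xt (h j))) [a [c ep]] hp.
have nzf := Jrad_phi0 nfJ.
apply/eqP; apply: contraT => nzp; exfalso; apply: nfJ.
set q := restrF d p.
have ep' : p = to_Xt' (iotaY q).
  rewrite iotaY_embF to_Xt_embF -{1}(embF_restr H1 hp); exact: embF_irr.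
have nzq : q != 0 by apply: contraNneq nzp => q0; rewrite ep' q0 !rmorph0.
have gI : goodI f h (ev f p).
  rewrite ep rmorphD rmorph_sum /=; apply: goodID.
    elim/big_rec: _ => [|j x _ hx]; first exact: goodI0.
    apply: goodID => //; rewrite rmorphM /=; apply: goodIM; first exact: good_ev.
    rewrite to_XtE ev_to_Xt; exact: goodI_gen.
  rewrite rmorphM rmorphB rmorphM /= rmorph1 to_XtE ev_to_Xt ev_t mulfV ?subrr ?mulr0.
    exact: goodI0.
  by rewrite tofrac_eq0.
have [N [a0 [ia0 e]]] := gI.
move: e; rewrite ep' ev_to_Xt -rmorphXn -rmorphM => /eqP; rewrite tofrac_eq => /eqP e.
have hI : Iid (phi (iotaY q * f ^+ N)) by rewrite e; exact: (in_ideal_rmorph phi ia0).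
rewrite rmorphM /= phi_iotaY rmorphXn /= in hI.
exists N; have := in_idealM ((tof q)^-1)%:MP hI.
by rewrite mulrA -rmorphM mulVf ?tofrac_eq0 // mul1r.
Qed.

Lemma L1 : cond1 -> ~ Jrad (phi f).
Proof.
move=> c1 [k [a ea]].
have [D [nzD [b eb]]] := clear_fam a.
have e1 : iotaY D * f ^+ k = \sum_i b i * h i.
  apply: phi_inj; rewrite rmorphM /= phi_iotaY rmorphXn /= ea mulr_sumr rmorph_sum.
  by apply: eq_bigr => i _; rewrite rmorphM /= eb mulrA.
set T := var_t K (d + m).
set x := to_Xt' f * T.
have mem : in_ideal (fun i : 'I_(r + 1) =>
                   match split i with
                   | inl j => to_Xt (h j)
                   | inr _ => to_Xt f * var_t K (d + m) - 1
                   end) (to_Xt' (iotaY D)).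
  apply/(in_ideal_split (fun j => to_Xt (h j))).
  exists (fun j => to_Xt' (b j) * T ^+ k), (- to_Xt' (iotaY D) * \sum_(i < k) x ^+ i).
  rewrite -/T -/x.
  have -> : \sum_(j < r) to_Xt' (b j) * T ^+ k * to_Xt (h j) = to_Xt' (iotaY D) * x ^+ k.
    rewrite /x exprMn [RHS]mulrA.
    have -> : to_Xt' (iotaY D) * to_Xt' f ^+ k = to_Xt' (iotaY D * f ^+ k) by rewrite rmorphM rmorphXn.
    rewrite e1 rmorph_sum mulr_suml.
    by apply: eq_bigr => j _; rewrite rmorphM /= mulrAC.
  by rewrite -mulrA [_ * (x - 1)]mulrC -subrX1 mulNr mulrBr mulr1 opprB addrC subrK.
have ifv : in_first_vars d (to_Xt' (iotaY D)).
  by rewrite iotaY_embF to_Xt_embF; apply: ifv_embF.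
have := c1 _ mem ifv; rewrite -(rmorph0 (to_Xt' (K := K) (Nn := d + m))) => /to_Xt_inj e0.
by move: nzD; rewrite -tofrac_eq0 -(mpolyC_eq0 m) -phi_iotaY e0 rmorph0 eqxx.
Qed.

End Main.

Section Main2.
Variables (K : fieldType) (d m r : nat) (h : 'I_r -> {mpoly K[d + m]}) (f : {mpoly K[d + m]}).
Local Notation n := (d + m)%N.
Local Notation P := {mpoly K[d + m]}.
Local Notation F := (KY K d).
Local Notation A := {mpoly (KY K d)[m]}.
Local Notation tof := (@FracField.tofrac {mpoly K[d]}).
Local Notation phi := (@phi K d m).
Local Notation iotaY := (@iotaY K d m).
Local Notation Iid := (Iid h).
Local Notation Jrad := (Jrad h).

Definition psiP (a : A) (Pol : {poly F}) : A := (map_poly (mpolyC m (R := F)) Pol).[a].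

Lemma psiPM a p q : psiP a (p * q) = psiP a p * psiP a q.
Proof. by rewrite /psiP rmorphM hornerM. Qed.
Lemma psiPD a p q : psiP a (p + q) = psiP a p + psiP a q.
Proof. by rewrite /psiP rmorphD hornerD. Qed.
Lemma psiPC a c : psiP a c%:P = c%:MP.
Proof. by rewrite /psiP map_polyC hornerC. Qed.
Lemma mapX : map_poly (mpolyC m (R := F)) 'X = 'X.
Proof.
apply/polyP => i; rewrite coef_map /= !coefX.
by case: (i == 1)%N; rewrite ?mpolyC1 ?mpolyC0.
Qed.
Lemma psiPX a : psiP a 'X = a.
Proof. by rewrite /psiP mapX hornerX. Qed.
Lemma psiPXn a k : psiP a ('X ^+ k) = a ^+ k.
Proof. by rewrite /psiP rmorphXn /= mapX hornerXn. Qed.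

Lemma L2 (frel : exists Pol : {poly F}, Pol != 0 /\ Iid (psiP (phi f) Pol)) :
  cond2 h f -> ~ Jrad (phi f) -> nonzero_zero_divisor_mod Jrad (phi f).
Proof.
move=> c2 nfJ; split => //.
apply: NNPP => ndz.
have ndz' : forall b, Jrad (phi f * b) -> Jrad b.
  move=> b hb; apply: NNPP => nb; exact: (ndz (ex_intro _ b (conj nb hb))).
have [Pol [nzPol relP]] := frel.
have [k [Q0 nrQ0 ePol]] := multiplicity_XsubC Pol 0.
rewrite nzPol /= in nrQ0.
have JQ0 : Jrad (psiP (phi f) Q0).
  move: relP; rewrite ePol subr0 psiPM psiPXn => /IJ.
  clear ePol; elim: k => [|k ih]; first by rewrite expr0 mulr1; exact: id.
  rewrite exprS mulrCA => H; exact: (ih (ndz' _ H)).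
clear ndz ndz' nfJ.
have : root (Q0 - (Q0.[0])%:P) 0 by rewrite /root hornerD hornerN hornerC subrr.
move/factor_theorem => [Q1 eQ1].
have eQ0 : Q0 = (Q0.[0])%:P + Q1 * 'X by rewrite polyC0 (subr0 'X) in eQ1; rewrite -eQ1 addrC subrK.
set c := Q0.[0] in eQ0 nrQ0.
have nzc : c != 0 by [].
set w := psiP (phi f) Q1.
have [k' hk'] := JQ0.
rewrite eQ0 psiPD psiPC psiPM psiPX -/w in hk'.
have hi : Iid ((c ^- k')%:MP * (c%:MP + w * phi f) ^+ k') by apply: in_idealM.
have e1 : 1 = (c ^- k')%:MP * (c%:MP + w * phi f) ^+ k'
              + (- ((c ^- k')%:MP * (w * \sum_(i < k') (c%:MP + w * phi f) ^+ (k'.-1 - i) * c%:MP ^+ i))) * phi f.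
  have := subrXX (c%:MP + w * phi f) (c%:MP) k'.
  rewrite (addrAC (c%:MP) (w * phi f) (- c%:MP)) (subrr (c%:MP)) (add0r (w * phi f)) => e.
  have eX : (c%:MP + w * phi f) ^+ k' = c%:MP ^+ k' + w * phi f * \sum_(i < k') (c%:MP + w * phi f) ^+ (k'.-1 - i) * c%:MP ^+ i.
    by move/eqP: e; rewrite subr_eq => /eqP ->; exact: addrC.
  rewrite eX mulrDr -addrA mulNr [w * phi f * _]mulrAC mulrA subrr addr0.
  by rewrite -rmorphXn -rmorphM /= mulVf ?expf_neq0 // mpolyC1.
set u := - ((c ^- k')%:MP * (w * \sum_(i < k') (c%:MP + w * phi f) ^+ (k'.-1 - i) * c%:MP ^+ i)) in e1.
set i0 := (c ^- k')%:MP * (c%:MP + w * phi f) ^+ k' in e1 hi.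
clearbody u i0.
have [a ea] := hi.
have [D [nzD [b eb]]] := clear_fam (fun o : option 'I_r => if o is Some j then a j else u).
have eD : iotaY D = \sum_(j < r) b (Some j) * h j + b None * f.
  apply: phi_inj; rewrite phi_iotaY rmorphD rmorph_sum /= -[(tof D)%:MP]mulr1 e1 ea.
  rewrite mulrDr mulr_sumr rmorphM /= (eb None); congr (_ + _); last by rewrite mulrA.
  by apply: eq_bigr => j _; rewrite rmorphM /= (eb (Some j)) mulrA.
have ifv : in_first_vars d (iotaY D) by rewrite iotaY_embF; apply: ifv_embF.
have mem : in_ideal (fun i : 'I_(r + 1) => match split i with inl j => h j | inr _ => f end) (iotaY D).
  by apply/in_ideal_split; exists (fun j => b (Some j)), (b None).
have := c2 _ mem ifv => e0.
move: nzD; rewrite -tofrac_eq0 -(mpolyC_eq0 m) -phi_iotaY e0 rmorph0 eqxx; exact: id.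
Qed.

End Main2.

Lemma horner_map_poly (R S : comNzRingType) (g : {rmorphism R -> S}) n (E : nat -> R) (x : S) :
  (map_poly g (\poly_(i < n) E i)).[x] = \sum_(i < n) g (E i) * x ^+ i.
Proof.
rewrite -(horner_poly n (fun i => g (E i)) x); congr horner; apply/polyP => k.
by rewrite coef_map !coef_poly; case: ifP => _ //=; rewrite rmorph0.
Qed.

Lemma exists_ker (F : fieldType) p q (M : 'M[F]_(p, q)) : (q < p)%N ->
  exists w : 'rV[F]_p, w != 0 /\ w *m M = 0.
Proof.
move=> ltqp.
have nrf : ~~ row_free M.
  rewrite /row_free; apply/negP => /eqP e.
  by have := rank_leq_col M; rewrite e leqNgt ltqp.
rewrite -kermx_eq0 in nrf.
have [i nzi] : exists i, row i (kermx M) != 0.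
  apply/existsP; apply: contraR nrf; rewrite negb_exists => /forallP hall.
  apply/eqP/row_matrixP => i; rewrite row0; exact/eqP/negbNE/hall.
exists (row i (kermx M)); split => //.
by rewrite -row_mul mulmx_ker row0.
Qed.

Lemma fin_rel (F : fieldType) m r (hh : 'I_r -> {mpoly F[m]}) (S : finType)
   (X : S -> {mpoly F[m]}) (a : {mpoly F[m]}) :
  (forall b, exists v : {ffun S -> F}, in_ideal hh (b - \sum_s (v s)%:MP * X s)) ->
  exists Pol : {poly F}, Pol != 0 /\ in_ideal hh ((map_poly (mpolyC m (R := F)) Pol).[a]).
Proof.
move=> red.
set N := #|S|.
have /fin_all_exists [V hV] : forall k : 'I_N.+1, exists v : {ffun S -> F},
    in_ideal hh (a ^+ k - \sum_s (v s)%:MP * X s) by move=> k; exact: red.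
pose M := \matrix_(k < N.+1, i < N) V k (enum_val i).
have [w [nzw wM]] := exists_ker M (ltnSn N).
exists (\poly_(k < N.+1) w 0 (inord k)); split.
  apply/negP => /eqP e; move/negP: nzw; apply; apply/eqP/rowP => k.
  have := congr1 (fun p : {poly F} => p`_k) e; rewrite /= coef_poly ltn_ord coef0 inord_val => ->.
  by rewrite mxE.
rewrite horner_map_poly.
under eq_bigr do rewrite inord_val.
have e0 : \sum_(k < N.+1) (w 0 k)%:MP * (\sum_s (V k s)%:MP * X s) = 0.
  rewrite (eq_bigr (fun k => \sum_s (w 0 k * V k s)%:MP * X s)); last first.
    by move=> k _; rewrite mulr_sumr; apply: eq_bigr => s _; rewrite mulrA -rmorphM.
  rewrite exchange_big /= big1 // => s _.
  rewrite -mulr_suml -rmorph_sum /=.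
  have -> : \sum_(k < N.+1) w 0 k * V k s = (w *m M) 0 (enum_rank s).
    by rewrite mxE; apply: eq_bigr => k _; rewrite mxE enum_rankK.
  by rewrite wM mxE mpolyC0 mul0r.
rewrite -[X in in_ideal _ X]subr0 -{2}e0 -sumrB.
apply: in_ideal_sum => k _; rewrite -mulrBr; apply: in_idealM; exact: hV.
Qed.

Section Red.
Variables (F : fieldType) (m r : nat) (hh : 'I_r -> {mpoly F[m]}).
Variables (Bs : 'I_m -> nat) (es : 'I_m -> nat -> F).
Hypothesis hrel : forall j, in_ideal hh ('X_j ^+ Bs j - \sum_(k < Bs j) (es j k)%:MP * 'X_j ^+ k).

Local Notation bnd := (\sum_j Bs j).+1.
Local Notation S := ('X_{1..m < bnd}).

Definition red (b : {mpoly F[m]}) := exists v : {ffun S -> F}, in_ideal hh (b - \sum_s (v s)%:MP * 'X_[s]).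

Lemma red0 : red 0.
Proof.
exists [ffun => 0]; rewrite big1 ?subr0; first exact: in_ideal0.
by move=> s _; rewrite ffunE mpolyC0 mul0r.
Qed.

Lemma redD b1 b2 : red b1 -> red b2 -> red (b1 + b2).
Proof.
move=> [v1 h1] [v2 h2]; exists [ffun s => v1 s + v2 s].
have -> : \sum_s ([ffun s => v1 s + v2 s] s)%:MP * 'X_[s] =
   \sum_s (v1 s)%:MP * 'X_[s] + \sum_s (v2 s)%:MP * 'X_[s].
  by rewrite -big_split; apply: eq_bigr => s _; rewrite ffunE mpolyCD mulrDl.
by rewrite opprD addrACA; apply: in_idealD.
Qed.

Lemma redM c b : red b -> red (c%:MP * b).
Proof.
move=> [v hv]; exists [ffun s => c * v s].
have -> : \sum_s ([ffun s => c * v s] s)%:MP * 'X_[s] = c%:MP * \sum_s (v s)%:MP * 'X_[s].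
  by rewrite mulr_sumr; apply: eq_bigr => s _; rewrite ffunE mpolyCM mulrA.
by rewrite -mulrBr; apply: in_idealM.
Qed.

Lemma redI i b : in_ideal hh i -> red b -> red (i + b).
Proof. by move=> hi [v hv]; exists v; rewrite -addrA; apply: in_idealD. Qed.

Lemma red_sum (I : Type) (s : seq I) (P : pred I) (G : I -> {mpoly F[m]}) :
  (forall i, P i -> red (G i)) -> red (\sum_(i <- s | P i) G i).
Proof.
move=> hG; elim/big_rec: _ => [|i x Pi hx]; first exact: red0.
by apply: redD => //; apply: hG.
Qed.

Lemma redX mo : red 'X_[mo].
Proof.
have [kk] := ubnP (mdeg mo); elim: kk mo => // kk IH mo hmo.
case: (ltnP (mdeg mo) bnd) => [lt|ge].
  pose s0 : S := BMultinom lt.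
  pose g := fun s : S => if s == s0 then 1 else 0 : F.
  exists (finfun g).
  rewrite (bigD1 s0) //=.
  have -> : \sum_(s | s != s0) ((finfun g) s)%:MP * 'X_[s] = 0.
    by apply: big1 => s /negbTE ns; rewrite (ffunE g s) /g ns mpolyC0 mul0r.
  rewrite (ffunE g s0) /g eqxx mpolyC1 mul1r addr0 subrr; exact: in_ideal0.
have [j hj] : exists j, (Bs j <= mo j)%N.
  apply/existsP; apply: contraLR ge; rewrite negb_exists => /forallP hall.
  rewrite -ltnNge ltnS mdegE; apply: leq_sum => j _.
  by have := hall j; rewrite -ltnNge => /ltnW.
set mo' := (mo - U_(j) *+ Bs j)%MM.
have emo : mo = (mo' + U_(j) *+ Bs j)%MM.
  apply/mnmP => i; rewrite mnmDE mnmBE mulmnE mnm1E.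
  case: eqP => [<-|_]; last by rewrite !mul0n subn0 addn0.
  by rewrite mul1n subnK.
have edeg : mdeg mo = (mdeg mo' + Bs j)%N by rewrite {1}emo mdegD mdegMn mdeg1 mul1n.
have -> : 'X_[mo] = 'X_[mo'] * ('X_j ^+ Bs j - \sum_(k < Bs j) (es j k)%:MP * 'X_j ^+ k)
                    + \sum_(k < Bs j) (es j k)%:MP * 'X_[mo' + U_(j) *+ k].
  have e1 : \sum_(k < Bs j) (es j k)%:MP * 'X_[mo' + U_(j) *+ k] = 'X_[mo'] * \sum_(k < Bs j) (es j k)%:MP * 'X_j ^+ k.
    by rewrite mulr_sumr; apply: eq_bigr => k _; rewrite mpolyXD -mpolyXn mulrCA.
  by rewrite e1 mulrBr subrK {1}emo mpolyXD mpolyXn.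
apply: redI; first by apply: in_idealM.
apply: red_sum => k _; apply: redM; apply: IH.
rewrite mdegD mdegMn mdeg1 mul1n -ltnS; apply: leq_trans hmo.
by rewrite edeg ltnS ltn_add2l.
Qed.

Lemma red_all b : red b.
Proof.
elim/mpolyind: b => [|c mo b _ _ hb]; first exact: red0.
by apply: redD => //; rewrite -mul_mpolyC; apply: redM; apply: redX.
Qed.

End Red.

Section Zrel.
Variables (K : fieldType) (d m r : nat) (h : 'I_r -> {mpoly K[d + m]}).
Local Notation n := (d + m)%N.
Local Notation P := {mpoly K[d + m]}.
Local Notation F := (KY K d).
Local Notation A := {mpoly (KY K d)[m]}.
Local Notation tof := (@FracField.tofrac {mpoly K[d]}).
Local Notation phi := (@phi K d m).
Local Notation iotaY := (@iotaY K d m).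

Definition uj (j : 'I_m) : {rmorphism {poly {mpoly K[d]}} -> P} :=
  horner_eval ('X_(rshift d j) : P) \o map_poly iotaY.

Lemma ujE j q : uj j q = (map_poly iotaY q).[('X_(rshift d j) : P)].
Proof. by []. Qed.

Lemma zrel (hmax : max_indep_first d h) (j : 'I_m) :
  exists B (e : nat -> F), Iid h ('X_j ^+ B - \sum_(k < B) (e k)%:MP * 'X_j ^+ k).
Proof.
have [h1 h2] := hmax.
set W := rshift d j |: [set lshift m i | i : 'I_d].
have inWl i : lshift m i \in W by rewrite in_setU1; apply/orP; right; apply: imset_f.
have inWr j' : (rshift d j' \in W) = (j' == j).
  rewrite in_setU1 (inj_eq (@rshift_inj _ _)); case: eqP => //= _.
  by apply/imsetP => [[i _ /eqP]]; rewrite eq_rlshift.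
have cW : (d < #|W|)%N.
  have nin : rshift d j \notin [set lshift m i | i : 'I_d].
    by apply/imsetP => [[i _ /eqP]]; rewrite eq_rlshift.
  rewrite cardsU1 nin card_imset ?card_ord //; exact: lshift_inj.
have [p [ip [vp nzp]]] := h2 W cW.
pose qv (i : 'I_n) : {poly {mpoly K[d]}} :=
  match split i with inl i' => ('X_i')%:P | inr j' => if j' == j then 'X else 0 end.
pose Q := mmap ((@polyC _) \o mpolyC d (R := K)) qv p.
have uQ : uj j Q = p.
  rewrite /Q (mmap_comp _ _ (uj j)) -[RHS](@supp_in_mmapE _ _ (fun i => i \in W) p vp).
  apply: eq_mmap => [c|i]; rewrite /comp; first by rewrite ujE map_polyC hornerC; exact: iotaC.
  rewrite /qv; case: splitP => [i' ei|j' ei].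
    have -> : i = lshift m i' by apply: val_inj.
    by rewrite ujE inWl map_polyC hornerC; exact: iotaX.
  have -> : i = rshift d j' by apply: val_inj.
  rewrite inWr; case: eqP => [->|_]; last by rewrite rmorph0.
  by rewrite ujE (map_polyX iotaY) hornerX.
have sQ : (1 < size Q)%N.
  rewrite ltnNge; apply/negP => /size1_polyC eQ.
  have : in_first_vars d p.
    rewrite -uQ eQ ujE map_polyC hornerC; change (in_first_vars d (iotaY (Q`_0))); rewrite iotaY_embF; apply: ifv_embF.
  by move/(h1 p ip)/eqP; rewrite (negbTE nzp).
have ephi : phi p = \sum_(k < size Q) (tof Q`_k)%:MP * 'X_j ^+ k.
  rewrite -uQ ujE (@horner_coef_wide _ (size Q)); last first.
    by rewrite map_polyE; apply: leq_trans (size_Poly _) _; rewrite size_map.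
  rewrite rmorph_sum; apply: eq_bigr => k _.
  by rewrite rmorphM rmorphXn /= coef_map /= phi_iotaY /phi mmapXU /vKYZ split_rshift.
set B := (size Q).-1.
have eB : size Q = B.+1 by rewrite /B prednK // ltnW.
set lc := tof (lead_coef Q).
have nzlc : lc != 0.
  by rewrite tofrac_eq0 lead_coef_eq0 -size_poly_eq0 -lt0n ltnW.
exists B, (fun k => - (tof Q`_k) / lc).
have -> : 'X_j ^+ B - \sum_(k < B) (- tof Q`_k / lc)%:MP * 'X_j ^+ k = (lc^-1)%:MP * phi p.
  rewrite ephi mulr_sumr eB big_ord_recr /= addrC; congr (_ + _).
    by rewrite mulrA -rmorphM /= /lc lead_coefE eB /= mulVf // mpolyC1 mul1r.
  rewrite -sumrN; apply: eq_bigr => k _.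
  by rewrite mulrA -rmorphM /= -mulNr -rmorphN /= mulNr opprK [lc^-1 * _]mulrC.
by apply: in_idealM; apply: (in_ideal_rmorph phi ip).
Qed.

End Zrel.

Section Fin.
Variables (K : fieldType) (d m r : nat) (h : 'I_r -> {mpoly K[d + m]}).
Local Notation F := (KY K d).
Local Notation A := {mpoly (KY K d)[m]}.
Local Notation phi := (@phi K d m).

Lemma zrel' (hmax : max_indep_first d h) (j : 'I_m) :
  exists BE : nat * {poly F}, Iid h ('X_j ^+ BE.1 - \sum_(k < BE.1) (BE.2`_k)%:MP * 'X_j ^+ k).
Proof.
have [B [e he]] := zrel hmax j.
exists (B, \poly_(k < B) e k) => /=.
have -> : \sum_(k < B) ((\poly_(k < B) e k)`_k)%:MP * 'X_j ^+ k = \sum_(k < B) (e k)%:MP * 'X_j ^+ k.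
  by apply: eq_bigr => k _; rewrite coef_poly ltn_ord.
exact: he.
Qed.

Lemma finite_rel (hmax : max_indep_first d h) (a : A) :
  exists Pol : {poly F}, Pol != 0 /\ Iid h (psiP a Pol).
Proof.
have /fin_all_exists [BE hBE] := zrel' hmax.
have red := red_all (Bs := fun j => (BE j).1) (es := fun j k => (BE j).2`_k) hBE.
have [Pol [nz hP]] := @fin_rel F m r (fun i => phi (h i)) ('X_{1..m < (\sum_j (BE j).1).+1}) (fun s => 'X_[s]) a red.
by exists Pol; split; [exact: nz | exact: hP].
Qed.

End Fin.

Unset Implicit Arguments.
Theorem theorem3 (K : fieldType) (d m r : nat) (h : 'I_r -> {mpoly K[d + m]})
    (f : {mpoly K[d + m]}) :
  max_indep_first d h ->
  ((forall p : {mpoly K[(d + m).+1]},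
       in_ideal (fun i : 'I_(r + 1) =>
                   match split i with
                   | inl j => to_Xt (h j)
                   | inr _ => to_Xt f * var_t K (d + m) - 1
                   end) p ->
       in_first_vars d p -> p = 0) /\
   (forall p : {mpoly K[d + m]},
       in_ideal (fun i : 'I_(r + 1) =>
                   match split i with
                   | inl j => h j
                   | inr _ => f
                   end) p ->
       in_first_vars d p -> p = 0))
  <->
  nonzero_zero_divisor_mod (in_radical (fun i : 'I_r => to_KYZ (h i))) (to_KYZ f).
Proof.
move=> hmax.
change ((cond1 h f /\ cond2 h f) <-> nonzero_zero_divisor_mod (Jrad h) (phi f)).
split.
  move=> [c1 c2]; apply: L2 => //.
    exact: finite_rel.
  exact: L1.
move=> nz; split; first exact: (R1 (proj1 nz)).
exact: R2.
Qed.
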